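(* Consider companies $i$ with parameters $\pi^0_i,\pi^1_i,\gamma_i>0$, $\mathrm{E}^{\mathrm{bau}}_i=\pi^0_i/\pi^1_i$, $\varrho_i=1/\pi^1_i+1/\gamma_i$, and a penalty $\lambda>0$ with $\lambda\varrho_i<\mathrm{E}^{\mathrm{bau}}_i$ for all $i$. Under the market scheme, for each company $i$: (1) If company $i$ purchases certificates directly at a given spot price $S$, its optimal demand is $\bm{\delta_i}(\bm{P_i}(S))=\bm{\delta_i}(S)=\mathrm{E}^{\mathrm{bau}}_i-S\varrho_i$. (2) If company $i$ purchases through a financial intermediary, then under the feasibility assumption $0<S\le2\lambda-\max_j(\mathrm{E}^{\mathrm{bau}}_j/\varrho_j)$ on the spot price $S$, the intermediated price is $\bm{P_i}(S)=\tfrac12(S+\mathrm{E}^{\mathrm{bau}}_i/\varrho_i)$, and the company's optimal demand at this price is $\bm{\delta_i}(\bm{P_i}(S))=\tfrac12(\mathrm{E}^{\mathrm{bau}}_i-S\varrho_i)$.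
   Context: Company $i$ has raw wealth $\pi_i(q)=\pi^0_iq-\tfrac{\pi^1_i}{2}q^2$, emissions $q$ reduced to $e^{-a}q$ at green cost $\tfrac{\gamma_i}{2}[(1-e^{-a})q]^2$. Facing a certificate price $P$, it maximizes $\pi_i(q)-\tfrac{\gamma_i}{2}[(1-e^{-a})q]^2-\delta P-\lambda(e^{-a}q-\delta)^+$ over $(q,a,\delta)$; its optimal certificate demand is denoted $\bm{\delta_i}(P)$ (equal to $\mathrm{E}^{\mathrm{bau}}_i-P\varrho_i$ for $0<P\le\lambda$). When buying directly at the auction, $\bm{P_i}(S)=S$. When buying through a financial intermediary that buys at spot price $S$, the intermediary sets $\bm{P_i}(S)=\arg\max_{P\in[S,\lambda]}\bm{\delta_i}(P)(P-S)$. *)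

(* Defs.v *)
From HB Require Import structures.
From mathcomp Require Import all_boot all_order all_algebra.
From mathcomp Require Import all_classical all_reals all_analysis.
Set Implicit Arguments. Unset Strict Implicit. Unset Printing Implicit Defensive.
Import Order.TTheory GRing.Theory Num.Theory.
Local Open Scope ring_scope.
Local Open Scope classical_set_scope.

Definition wealth (R : realType) (pi0 pi1 q : R) : R :=
  pi0 * q - pi1 / 2 * q ^+ 2.

(* Objective of a company facing certificate price P, with production q,
   abatement a and certificate demand d:
   pi(q) - gamma/2 [(1 - e^{-a}) q]^2 - d P - lam (e^{-a} q - d)^+ *)
Definition company_obj (R : realType) (pi0 pi1 gam lam P q a d : R) : R :=
  wealth pi0 pi1 q - gam / 2 * ((1 - expR (- a)) * q) ^+ 2 - d * P
  - lam * Num.max (expR (- a) * q - d) 0.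

Definition is_opt_demand (R : realType) (pi0 pi1 gam lam P d : R) : Prop :=
  0 <= d /\ exists q a, 0 <= q /\ 0 <= a /\
    forall q' a' d', 0 <= q' -> 0 <= a' -> 0 <= d' ->
      company_obj pi0 pi1 gam lam P q' a' d' <= company_obj pi0 pi1 gam lam P q a d.

(* Optimal certificate demand bm_delta(P): the (largest) optimal demand. *)
Definition opt_demand (R : realType) (pi0 pi1 gam lam P : R) : R :=
  sup [set d | is_opt_demand pi0 pi1 gam lam P d].

Definition Ebau (R : realType) (pi0 pi1 : R) : R := pi0 / pi1.
Definition rho (R : realType) (pi1 gam : R) : R := 1 / pi1 + 1 / gam.

Definition direct_price (R : realType) (S : R) : R := S.

Definition is_intermediated_price (R : realType) (pi0 pi1 gam lam S P : R) : Prop :=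
  S <= P <= lam /\
  forall P', S <= P' <= lam ->
    opt_demand pi0 pi1 gam lam P' * (P' - S) <= opt_demand pi0 pi1 gam lam P * (P - S).

(* Main.v *)
Require Import Defs.
From HB Require Import structures.
From mathcomp Require Import all_boot all_order all_algebra.
From mathcomp Require Import all_classical all_reals all_analysis.
From mathcomp Require Import ring lra.
Import Order.TTheory GRing.Theory Num.Theory.
Local Open Scope ring_scope.

Lemma Hid (R : realType) (pi0 pi1 gam P q x : R) : pi1 != 0 -> gam != 0 ->
  pi0 * q - pi1 / 2 * q ^+ 2 - gam / 2 * x ^+ 2 - P * (q - x)
  + pi1 / 2 * (q - (pi0 - P) / pi1) ^+ 2 + gam / 2 * (x - P / gam) ^+ 2
  = pi1 / 2 * ((pi0 - P) / pi1) ^+ 2 + gam / 2 * (P / gam) ^+ 2.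
Proof. by move=> h1 h2; field; rewrite ?h1 ?h2 ?pnatr_eq0. Qed.

Lemma obj_bound (R : realType) (pi0 pi1 gam lam P q a d : R) :
  0 < pi1 -> 0 < gam -> 0 <= P -> P <= lam ->
  company_obj pi0 pi1 gam lam P q a d
  + pi1 / 2 * (q - (pi0 - P) / pi1) ^+ 2
  + gam / 2 * ((1 - expR (- a)) * q - P / gam) ^+ 2
  + P * Num.max (d - expR (- a) * q) 0
  <= pi1 / 2 * ((pi0 - P) / pi1) ^+ 2 + gam / 2 * (P / gam) ^+ 2.
Proof.
move=> h1 h2 hP hPl.
have := @Hid _ pi0 pi1 gam P q ((1 - expR (- a)) * q) (lt0r_neq0 h1) (lt0r_neq0 h2).
rewrite /company_obj /wealth.
set t := expR (- a).
set A := pi1 / 2 * _; set B := gam / 2 * _ ; set C := pi1 / 2 * _ ^+ 2.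
set G := gam / 2 * (_ - P / gam) ^+ 2; set M := pi1 / 2 * _ + _.
move=> E.
set z := pi0 * q in E *; set w := P * (q - (1 - t) * q) in E *.
have ew : w = P * (t * q) by rewrite /w; congr (_ * _); ring.
have [hd|hd] := leP d (t * q).
  rewrite (@max_r _ _ (d - t * q)) ?subr_le0 // (@max_l _ _ (t * q - d)) ?subr_ge0 //.
  have key : d * P + lam * (t * q - d) >= w.
    rewrite ew -subr_ge0.
    have -> : d * P + lam * (t * q - d) - P * (t * q) = (lam - P) * (t * q - d) by ring.
    by apply: mulr_ge0; rewrite subr_ge0.
  rewrite mulr0 addr0.
  move: key; set u := d * P; set v := lam * _.
  clearbody A B C G M t z w u v; clear ew; move=> K. rewrite -E. lra.
have h3 : 0 <= d - t * q by rewrite subr_ge0 ltW.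
have h4 : t * q - d <= 0 by rewrite subr_le0 ltW.
rewrite (max_l h3) (max_r h4).
have key : d * P + lam * 0 = w + P * (d - t * q) by rewrite ew; ring.
move: key; set u := d * P; set v := lam * _; set y := P * _.
clearbody A B C G M t z w u v y; clear ew; move=> K. rewrite -E. lra.
Qed.

Lemma sq0 (R : realType) (c y : R) : 0 < c -> c * y ^+ 2 <= 0 -> y = 0.
Proof.
move=> hc h; have : y ^+ 2 = 0.
  by apply/le_anti; rewrite sqr_ge0 andbT -(pmulr_rle0 _ hc).
by move/eqP; rewrite sqrf_eq0 => /eqP.
Qed.

Lemma demand (R : realType) (pi0 pi1 gam lam P : R) :
  0 < pi0 -> 0 < pi1 -> 0 < gam -> 0 < P -> P <= lam ->
  P * rho pi1 gam < Ebau pi0 pi1 ->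
  opt_demand pi0 pi1 gam lam P = Ebau pi0 pi1 - P * rho pi1 gam.
Proof.
move=> h0 h1 h2 hP hPl hf.
set es := Ebau pi0 pi1 - P * rho pi1 gam.
set qs := (pi0 - P) / pi1.
set xs := P / gam.
have eq : es = qs - xs by rewrite /es /qs /xs /Ebau /rho; ring.
have es0 : 0 < es by rewrite /es subr_gt0.
have xs0 : 0 < xs by rewrite /xs divr_gt0.
have qs0 : 0 < qs by move: eq; lra.
set as_ := ln (qs / es).
have ht : expR (- as_) = es / qs.
  rewrite expRN /as_ lnK; first by rewrite invf_div.
  by rewrite posrE divr_gt0.
have as0 : 0 <= as_.
  apply: ln_ge0; rewrite ler_pdivlMr // mul1r; move: eq; lra.
set M := pi1 / 2 * ((pi0 - P) / pi1) ^+ 2 + gam / 2 * (P / gam) ^+ 2.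
have objs : company_obj pi0 pi1 gam lam P qs as_ es = M.
  rewrite /company_obj /wealth ht.
  have -> : es / qs * qs = es by rewrite divfK // lt0r_neq0.
  have -> : (1 - es / qs) * qs = xs.
    by rewrite mulrBl mul1r divfK ?lt0r_neq0 // eq; ring.
  rewrite subrr maxxx mulr0 subr0.
  rewrite /M -(@Hid _ pi0 pi1 gam P qs xs (lt0r_neq0 h1) (lt0r_neq0 h2)).
  rewrite /qs /xs !subrr expr0n /= !mulr0 !addr0 -/qs -/xs eq.
  by rewrite (mulrC P).
have mem : is_opt_demand pi0 pi1 gam lam P es.
  split; first exact: ltW.
  exists qs, as_; split; first exact: ltW.
  split => // q' a' d' _ _ _.
  rewrite objs.
  have := @obj_bound _ pi0 pi1 gam lam P q' a' d' h1 h2 (ltW hP) hPl.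
  rewrite -/M.
  have u1 : 0 <= pi1 / 2 * (q' - (pi0 - P) / pi1) ^+ 2.
    by apply: mulr_ge0; [apply: divr_ge0; [exact: ltW|] |exact: sqr_ge0].
  have u2 : 0 <= gam / 2 * ((1 - expR (- a')) * q' - P / gam) ^+ 2.
    by apply: mulr_ge0; [apply: divr_ge0; [exact: ltW|] |exact: sqr_ge0].
  have u3 : 0 <= P * Num.max (d' - expR (- a') * q') 0.
    by apply: mulr_ge0; [exact: ltW | rewrite le_max lexx orbT].
  move: u1 u2 u3.
  set s1 := pi1 / 2 * _; set s2 := gam / 2 * _; set s3 := P * _.
  clearbody s1 s2 s3; lra.
have ub : forall d, is_opt_demand pi0 pi1 gam lam P d -> d <= es.
  move=> d [d0 [q [a [q0 [a0 hopt]]]]].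
  have := hopt qs as_ es (ltW qs0) as0 (ltW es0).
  rewrite objs => hM.
  have := @obj_bound _ pi0 pi1 gam lam P q a d h1 h2 (ltW hP) hPl.
  rewrite -/M.
  have u1 : 0 <= pi1 / 2 * (q - (pi0 - P) / pi1) ^+ 2.
    by apply: mulr_ge0; [apply: divr_ge0; [exact: ltW|] |exact: sqr_ge0].
  have u2 : 0 <= gam / 2 * ((1 - expR (- a)) * q - P / gam) ^+ 2.
    by apply: mulr_ge0; [apply: divr_ge0; [exact: ltW|] |exact: sqr_ge0].
  have u3 : 0 <= P * Num.max (d - expR (- a) * q) 0.
    by apply: mulr_ge0; [exact: ltW | rewrite le_max lexx orbT].
  move: u1 u2 u3 hM.
  set s1 := pi1 / 2 * _; set s2 := gam / 2 * _; set s3 := P * _.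
  move=> u1 u2 u3 hM hb.
  have e1 : s1 <= 0 by clearbody s1 s2 s3; lra.
  have e2 : s2 <= 0 by clearbody s1 s2 s3; lra.
  have e3 : s3 <= 0 by clearbody s1 s2 s3; lra.
  have /eqP := @sq0 _ _ _ (divr_gt0 h1 (ltr0Sn _ 1)) e1; rewrite subr_eq0 -/qs => /eqP hq.
  have /eqP := @sq0 _ _ _ (divr_gt0 h2 (ltr0Sn _ 1)) e2; rewrite subr_eq0 -/xs => /eqP hx.
  move: e3; rewrite /s3 pmulr_rle0 // ge_max lexx andbT subr_le0 => hd.
  apply: (le_trans hd); rewrite eq -hq -hx; rewrite le_eqVlt; apply/orP; left; apply/eqP; ring.
apply/le_anti/andP; split.
  apply: ge_sup; first by exists es.
  by move=> d /ub.
by apply: ub_le_sup; [exists es => d /ub | ].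
Qed.

Lemma gid (R : realType) (E r S P : R) : r != 0 ->
  (E - (S + E / r) / 2 * r) * ((S + E / r) / 2 - S) - (E - P * r) * (P - S)
  = r * (P - (S + E / r) / 2) ^+ 2.
Proof. by move=> h; field; rewrite ?h ?pnatr_eq0. Qed.

Theorem proposition2p6 (R : realType) (n : nat) (pi0 pi1 gam : 'I_n -> R) (lam : R)
  (hpar : forall j, 0 < pi0 j /\ 0 < pi1 j /\ 0 < gam j)
  (hlam : 0 < lam)
  (hfeas : forall j, lam * rho (pi1 j) (gam j) < Ebau (pi0 j) (pi1 j))
  (i : 'I_n) :
  (forall S : R, 0 < S <= lam ->
     opt_demand (pi0 i) (pi1 i) (gam i) lam (direct_price S)
       = opt_demand (pi0 i) (pi1 i) (gam i) lam S /\
     opt_demand (pi0 i) (pi1 i) (gam i) lam S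
       = Ebau (pi0 i) (pi1 i) - S * rho (pi1 i) (gam i)) /\
  (forall S : R, 0 < S ->
     (forall j, S <= 2 * lam - Ebau (pi0 j) (pi1 j) / rho (pi1 j) (gam j)) ->
     (forall P, is_intermediated_price (pi0 i) (pi1 i) (gam i) lam S P <->
        P = (S + Ebau (pi0 i) (pi1 i) / rho (pi1 i) (gam i)) / 2) /\
     opt_demand (pi0 i) (pi1 i) (gam i) lam
        ((S + Ebau (pi0 i) (pi1 i) / rho (pi1 i) (gam i)) / 2)
       = (Ebau (pi0 i) (pi1 i) - S * rho (pi1 i) (gam i)) / 2).
Proof.
have [h0 [h1 h2]] := hpar i.
have hf := hfeas i.
set E := Ebau (pi0 i) (pi1 i) in hf *.
set r := rho (pi1 i) (gam i) in hf *.
have r0 : 0 < r by rewrite /r /rho addr_gt0 // div1r invr_gt0.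
have dem : forall P, 0 < P -> P <= lam -> opt_demand (pi0 i) (pi1 i) (gam i) lam P = E - P * r.
  move=> P hP hPl; apply: demand => //.
  apply: le_lt_trans hf; by rewrite ler_pM2r.
split.
  move=> S /andP [hS hSl]; split => //; exact: dem.
move=> S hS hSj.
have hK : lam < E / r by rewrite ltr_pdivlMr.
have hSl := hSj i; rewrite -/E -/r in hSl.
set Ps := (S + E / r) / 2.
have Ps1 : S < Ps by rewrite /Ps; lra.
have Ps2 : Ps <= lam by rewrite /Ps; lra.
have rn0 : r != 0 by rewrite lt0r_neq0.
have key : forall P, S <= P -> P <= lam ->
    opt_demand (pi0 i) (pi1 i) (gam i) lam Ps * (Ps - S)
    - opt_demand (pi0 i) (pi1 i) (gam i) lam P * (P - S) = r * (P - Ps) ^+ 2.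
  move=> P h3 h4.
  rewrite dem ?dem //; [|lra|lra].
  exact: gid.
split.
  move=> P; split.
    move=> [/andP [h3 h4] hmax].
    have := hmax Ps; rewrite (ltW Ps1) Ps2 => /(_ isT).
    rewrite -subr_le0 key // => hh.
    apply/eqP; rewrite -subr_eq0; apply/eqP.
    exact: (@sq0 _ r).
  move=> ->; split; first by rewrite Ps2 (ltW Ps1).
  move=> P' /andP [h3 h4].
  rewrite -subr_ge0 key //; apply: mulr_ge0; [exact: ltW | exact: sqr_ge0].
rewrite dem; [|lra|lra].
rewrite /Ps; field; rewrite ?rn0 ?pnatr_eq0 //.
Qed.
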